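(* Let $G$ be a connected graph of order $n\geq 5$ and let $k$ be an integer with $3\leq k\leq n$. Then $px_k(G)=n-2$ if and only if $G\cong S_n^+$ or $G\cong G_0$, where $S_n^+$ is the graph obtained from the star $S_n=K_{1,n-1}$ by adding one edge joining two of its leaves, and $G_0$ is the tree on $n$ vertices obtained from the star $K_{1,n-2}$ by attaching one new pendant vertex to one of its leaves (equivalently, obtained from $K_{1,n-1}$ by subdividing one edge once and deleting a leaf; it is the unique tree on $n$ vertices with maximum degree $n-2$).
   Context: All graphs are finite, simple, undirected and connected. An edge-coloring of a graph assigns a color to each edge (adjacent edges may receive the same color). A tree in an edge-colored graph is proper if any two adjacent edges of the tree receive different colors. For $S\subseteq V(G)$, an $S$-tree is a subgraph of $G$ that is a tree containing all vertices of $S$. For a connected graph $G$ of order $n$ and an integer $k$ with $2\le k\le n$, an edge-coloring of $G$ is a $k$-proper coloring if for every set $S$ of $k$ vertices of $G$ there exists a proper $S$-tree in $G$. The $k$-proper index $px_k(G)$ is the minimum number of colors used in a $k$-proper coloring of $G$. *)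

(* Defs.v *)
From mathcomp Require Import all_boot.
Set Implicit Arguments. Unset Strict Implicit. Unset Printing Implicit Defensive.

Definition simple_graph (T : finType) (e : rel T) : Prop :=
  symmetric e /\ irreflexive e.

Definition connected_graph (T : finType) (e : rel T) : Prop :=
  forall x y : T, connect e x y.

Definition edge_coloring (T : finType) (e : rel T) (m : nat) (c : T -> T -> nat) : Prop :=
  forall x y, e x y -> c x y = c y x /\ c x y < m.

Definition subgraph (T : finType) (e : rel T) (V : {set T}) (f : rel T) : Prop :=
  symmetric f /\ (forall x y, f x y -> e x y /\ x \in V /\ y \in V).

Definition is_tree (T : finType) (V : {set T}) (f : rel T) : Prop :=
  (exists x, x \in V) /\
  (forall x y, x \in V -> y \in V -> connect f x y) /\
  (forall s : seq T, uniq s -> 3 <= size s -> ~~ cycle f s).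

Definition proper_tree (T : finType) (c : T -> T -> nat) (f : rel T) : Prop :=
  forall x y z, f x y -> f x z -> y != z -> c x y != c x z.

Definition k_proper_coloring (T : finType) (e : rel T) (k m : nat) (c : T -> T -> nat) : Prop :=
  edge_coloring e m c /\
  forall S : {set T}, #|S| = k ->
    exists (V : {set T}) (f : rel T),
      subgraph e V f /\ is_tree V f /\ S \subset V /\ proper_tree c f.

Definition px_k_eq (T : finType) (e : rel T) (k p : nat) : Prop :=
  (exists c, k_proper_coloring e k p c) /\
  (forall m c, k_proper_coloring e k m c -> p <= m).

Definition isomorphic (T : finType) (e : rel T) (n : nat) (R : rel 'I_n) : Prop :=
  exists phi : T -> 'I_n, bijective phi /\ forall x y, e x y = R (phi x) (phi y).

(* S_n^+ : star with centre 0, leaves 1..n-1, plus the edge {1,2}. *)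
Definition Splus (n : nat) : rel 'I_n := fun i j =>
  let a := nat_of_ord i in let b := nat_of_ord j in
  [|| (a == 0) && (b != 0), (b == 0) && (a != 0),
      (a == 1) && (b == 2) | (a == 2) && (b == 1)].

(* G_0 : star with centre 0 and leaves 1..n-2, plus pendant vertex n-1 attached to 1. *)
Definition G0 (n : nat) : rel 'I_n := fun i j =>
  let a := nat_of_ord i in let b := nat_of_ord j in
  [|| (a == 0) && (1 <= b <= n - 2), (b == 0) && (1 <= a <= n - 2),
      (a == 1) && (b == n - 1) | (b == 1) && (a == n - 1)].
Arguments isomorphic [T] e n R.
Arguments Splus n : clear implicits.
Arguments G0 n : clear implicits.

(* Main.v *)
Require Import Defs.
From mathcomp Require Import all_boot zify.
Set Implicit Arguments. Unset Strict Implicit. Unset Printing Implicit Defensive.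

Lemma cross (T : finType) (f : rel T) (A : {set T}) x y :
  connect f x y -> x \in A -> y \notin A ->
  exists u v, [/\ u \in A, v \notin A & f u v].
Proof.
move/connectP=> [p pth ->]; elim: p x pth => [|z p IH] x /= pth xA.
  by rewrite xA.
move/andP: pth => [fxz pth].
case zA: (z \in A); first exact: IH.
by move=> _; exists x, z; rewrite xA zA.
Qed.

Lemma grow (T : finType) (X : {set T}) k :
  #|X| <= k <= #|T| -> exists S : {set T}, X \subset S /\ #|S| = k.
Proof.
move=> /andP[h1 h2].
have [d kd] : exists d, k = #|X| + d by exists (k - #|X|); lia.
subst k.
move: h2; clear h1; elim: d X => [|d IH] X h.
  by exists X; rewrite addn0.
case: (pickP [pred v | v \notin X]) => [v vX0|H].
  have vX : (v \in X) = false by apply: negbTE.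

  have c1 : #|v |: X| = #|X|.+1 by rewrite cardsU1 vX.
  have [S [sub cS]] := IH (v |: X) ltac:(lia).
  exists S; split; last by rewrite cS; lia.
  by apply: subset_trans sub; apply: subsetUr.
have XT : X = setT.
  by apply/setP=> v; rewrite inE; move: (H v) => /= /negbFE.
by exfalso; rewrite XT cardsT in h; lia.
Qed.

Lemma inj_count (T : finType) (A : {set T}) (g : T -> nat) m :
  {in A &, injective g} -> (forall v, v \in A -> g v < m) -> #|A| <= m.
Proof.
move=> inj bd; rewrite cardE -(size_map g) -[m](size_iota 0 m).
apply: uniq_leq_size.
  rewrite map_inj_in_uniq ?enum_uniq //; move=> x y; rewrite !mem_enum; exact: inj.
by move=> w /mapP[v]; rewrite mem_enum => vA ->; rewrite mem_iota add0n; exact: bd.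
Qed.

Section Engine.
Variables (T : finType) (r : T) (par : T -> T) (dep : T -> nat).

Definition trel : rel T := fun x y =>
  ((y != r) && (par y == x)) || ((x != r) && (par x == y)).

Definition tcol (L : T -> nat) (x y : T) : nat :=
  if (y != r) && (par y == x) then L y
  else if (x != r) && (par x == y) then L x else 0.

Hypothesis hdep : forall v, v != r -> dep (par v) < dep v.

Lemma no_mutual v w : v != r -> w != r -> par v = w -> par w = v -> False.
Proof. move=> vr wr pv pw; have := hdep vr; have := hdep wr; rewrite pv pw; lia. Qed.

Lemma trel_sym : symmetric trel.
Proof. by move=> x y; rewrite /trel orbC. Qed.

Lemma trel_root x : connect trel x r.
Proof.
elim: {x}(dep x) {-2}x (leqnn (dep x)) => [|d IH] x hx.
  case: (eqVneq x r) => [->|xr]; first exact: connect0.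
  by have := hdep xr; lia.
case: (eqVneq x r) => [->|xr]; first exact: connect0.
apply: (connect_trans (y := par x)); last by apply: IH; have := hdep xr; lia.
by apply: connect1; rewrite /trel xr eqxx orbT.
Qed.

Lemma trel_conn x y : connect trel x y.
Proof.
apply: connect_trans (trel_root x) _.
by rewrite (sym_connect_sym trel_sym); exact: trel_root.
Qed.

Lemma seq_max (s : seq T) : s != [::] -> exists2 x, x \in s & forall y, y \in s -> dep y <= dep x.
Proof.
elim: s => [|a s IH] // _.
case: (eqVneq s [::]) => [->|sn].
  by exists a; rewrite ?inE // => y; rewrite inE => /eqP ->.
have [x xs hx] := IH sn.
case: (leqP (dep a) (dep x)) => h.
  exists x; first by rewrite inE xs orbT.
  by move=> y; rewrite inE => /orP[/eqP ->|]; [|apply: hx].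
exists a; first by rewrite inE eqxx.
move=> y; rewrite inE => /orP[/eqP ->//|/hx]; lia.
Qed.

Lemma trel_acyclic (s : seq T) : uniq s -> 3 <= size s -> ~~ cycle trel s.
Proof.
move=> us ss; apply/negP => cs.
have [x xs hx] : exists2 x, x \in s & forall y, y \in s -> dep y <= dep x.
  by apply: seq_max; apply/eqP => s0; rewrite s0 in ss.
have [i s' es] := rot_to xs.
have cs' : cycle trel (x :: s') by rewrite -es rot_cycle.
have us' : uniq (x :: s') by rewrite -es rot_uniq.
have ss' : 3 <= size (x :: s') by rewrite -es size_rot.
have mem' : forall y, y \in x :: s' -> y \in s by move=> y; rewrite -es mem_rot.
case: s' es cs' us' ss' mem' => [|y t] // _ cs' us' ss' mem'.
case/lastP: t cs' us' ss' mem' => [|t z] cs' us' ss' mem' //.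
move: cs' => /= /andP[txy]; rewrite rcons_path last_rcons => /andP[_ tzx].
have yz : y != z.
  move: us' => /= /andP[_ /andP[yn _]]; apply/eqP => eyz; move: yn.
  by rewrite eyz mem_rcons mem_head.
have hy := hx y (mem' y ltac:(by rewrite !inE eqxx orbT)).
have hz := hx z (mem' z ltac:(by rewrite !inE mem_rcons mem_head !orbT)).
move: txy tzx; rewrite /trel => /orP[/andP[yr /eqP py]|/andP[xr /eqP px]].
  by have := hdep yr; rewrite py; lia.
move=> /orP[/andP[xr' /eqP px']|/andP[zr /eqP pz]].
  by move: yz; rewrite -px -px' eqxx.
by have := hdep zr; rewrite pz; lia.
Qed.

Lemma not_both a b : (b != r) && (par b == a) -> (a != r) && (par a == b) -> False.
Proof.
by move=> /andP[br /eqP pb] /andP[ar /eqP pa]; apply: (no_mutual br ar pb pa).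
Qed.

Lemma engine_core (e : rel T) (m : nat) (L : T -> nat) :
  simple_graph e -> (forall v, v != r -> e (par v) v) ->
  (forall v, v != r -> L v < m) -> 0 < m ->
  (forall u w, u != r -> w != r -> u != w ->
     (par u == par w) || (par u == w) -> L u != L w) ->
  forall k, exists c, k_proper_coloring e k m c.
Proof.
move=> [esym eirr] he hL m0 hLC k; exists (tcol L); split.
  move=> x y exy; rewrite /tcol.
  case E1: ((y != r) && (par y == x)); case E2: ((x != r) && (par x == y)) => //=.
  - by case: (not_both E1 E2).
  - by split=> //; apply: hL; case/andP: E1.
  - by split=> //; apply: hL; case/andP: E2.
move=> S _; exists setT, trel; split; [|split; [|split]].
- split; first exact: trel_sym.
  move=> x y; rewrite !inE /trel => /orP[/andP[yr /eqP <-]|/andP[xr /eqP <-]].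
    by split=> //; apply: he.
  by split=> //; rewrite esym; apply: he.
- split; first by exists r; rewrite inE.
  by split=> [x y _ _|]; [apply: trel_conn | apply: trel_acyclic].
- exact: subsetT.
move=> x y z txy txz yz; rewrite /tcol.
case E1: ((y != r) && (par y == x)); case E2: ((x != r) && (par x == y));
  case E3: ((z != r) && (par z == x)); case E4: ((x != r) && (par x == z)) => //=;
  try (by case: (not_both E1 E2)); try (by case: (not_both E3 E4));
  try (by move: txy; rewrite /trel E1 E2); try (by move: txz; rewrite /trel E3 E4).
- move: E1 E3 => /andP[yr /eqP py] /andP[zr /eqP pz].
  by apply: hLC => //; rewrite py pz eqxx.
- move: E1 E4 => /andP[yr /eqP py] /andP[xr /eqP px].
  by apply: hLC => //; [apply/eqP => yx; have := hdep yr; rewrite py yx; lia | rewrite py eqxx orbT].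
- move: E2 E3 => /andP[xr /eqP px] /andP[zr /eqP pz].
  rewrite eq_sym; apply: hLC => //; first by apply/eqP => zx; have := hdep zr; rewrite pz zx; lia.
  by rewrite pz eqxx orbT.
- move: E2 E4 => /andP[_ /eqP px] /andP[_ /eqP px'].
  by move: yz; rewrite -px -px' eqxx.
Qed.

End Engine.

Definition cf (T : finType) (par : T -> T) (u w : T) :=
  [&& par u != par w, par u != w & par w != u].

Lemma engine_rep (T : finType) (e : rel T) (r : T) (par : T -> T) (dep : T -> nat)
  (B : {set T}) (rep : T -> T) (m : nat) :
  simple_graph e -> (forall v, v != r -> e (par v) v && (dep (par v) < dep v)) ->
  (forall v, v != r -> rep v \in ~: (r |: B)) ->
  (forall u w, u != r -> w != r -> u != w -> rep u = rep w -> cf par u w) ->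
  #|~: (r |: B)| <= m -> 0 < m -> forall k, exists c, k_proper_coloring e k m c.
Proof.
move=> sg htr hrep hcf hm m0.
pose R := [set rep v | v in ~: [set r]].
have RB : R \subset ~: (r |: B).
  by apply/subsetP => _ /imsetP[v vin ->]; apply: hrep; move: vin; rewrite !inE.
have Rin v : v != r -> rep v \in R by move=> vr; apply: imset_f; rewrite !inE.
pose L v := index (rep v) (enum R).
have Linj u w : u != r -> w != r -> L u = L w -> rep u = rep w.
  move=> ur wr eL.
  have e1 : nth (rep u) (enum R) (L u) = rep u by rewrite /L nth_index // mem_enum Rin.
  have e2 : nth (rep u) (enum R) (L w) = rep w by rewrite /L nth_index // mem_enum Rin.
  by rewrite -e1 -e2 eL.
apply: (@engine_core T r par dep _ e m L) => //.
- by move=> v vr; case/andP: (htr v vr).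
- by move=> v vr; case/andP: (htr v vr).
- move=> v vr; apply: leq_trans hm; apply: leq_trans (subset_leq_card RB).
  by rewrite /L cardE index_mem mem_enum Rin.
- move=> u w ur wr uw cond; apply/negP => /eqP /(Linj _ _ ur wr) er.
  by move: (hcf u w ur wr uw er) cond => /and3P[/negbTE -> /negbTE -> _].
Qed.

Lemma cfC (T : finType) (par : T -> T) u w : cf par u w = cf par w u.
Proof. by rewrite /cf eq_sym; case: (par w != par u); case: (par u != w); case: (par w != u). Qed.

Lemma card_compl3 (T : finType) (r b1 b2 : T) :
  r != b1 -> r != b2 -> b1 != b2 -> #|~: (r |: [set b1; b2])| = #|T| - 3.
Proof.
move=> h1 h2 h3; have := cardsC (r |: [set b1; b2]).
by rewrite cardsU1 cards2 !inE negb_or h1 h2 h3 /=; lia.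
Qed.

Lemma card_compl2 (T : finType) (r b1 : T) :
  r != b1 -> #|~: (r |: [set b1])| = #|T| - 2.
Proof.
move=> h1; have := cardsC (r |: [set b1]).
by rewrite cardsU1 cards1 !inE h1 /=; lia.
Qed.

Lemma engine2 (T : finType) (e : rel T) (r : T) (par : T -> T) (dep : T -> nat)
  (a1 b1 a2 b2 : T) :
  simple_graph e -> 5 <= #|T| ->
  (forall v, v != r -> e (par v) v && (dep (par v) < dep v)) ->
  r != a1 -> r != b1 -> r != a2 -> r != b2 -> a1 != b1 -> a1 != a2 -> a1 != b2 ->
  b1 != a2 -> b1 != b2 -> a2 != b2 ->
  cf par a1 b1 -> cf par a2 b2 ->
  forall k, exists c, k_proper_coloring e k (#|T| - 3) c.
Proof.
move=> sg n5 htr ra1 rb1 ra2 rb2 a1b1 a1a2 a1b2 b1a2 b1b2 a2b2 cf1 cf2.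
pose rep v := if v == b1 then a1 else if v == b2 then a2 else v.
apply: (@engine_rep T e r par dep [set b1; b2] rep) => //; last first.
- lia.
- by rewrite card_compl3.
- have r1 : rep b1 = a1 by rewrite /rep eqxx.
  have r2 : rep b2 = a2 by rewrite /rep eq_sym (negbTE b1b2) eqxx.
  have r0 v : v != b1 -> v != b2 -> rep v = v by move=> h1 h2; rewrite /rep (negbTE h1) (negbTE h2).
  move=> u w ur wr uw.
  case: (eqVneq u b1) => [eu|ub1].
    subst u; case: (eqVneq w b1) => [ewb|wb1]; first by rewrite ewb eqxx in uw.
    case: (eqVneq w b2) => [->|wb2]; first by rewrite r1 r2 => /eqP; rewrite (negbTE a1a2).
    by rewrite r1 (r0 _ wb1 wb2) => <-; rewrite cfC.
  case: (eqVneq u b2) => [eu|ub2].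
    subst u; case: (eqVneq w b2) => [ewb|wb2]; first by rewrite ewb eqxx in uw.
    case: (eqVneq w b1) => [->|wb1]; first by rewrite r1 r2 => /eqP; rewrite eq_sym (negbTE a1a2).
    by rewrite r2 (r0 _ wb1 wb2) => <-; rewrite cfC.
  rewrite (r0 _ ub1 ub2).
  case: (eqVneq w b1) => [->|wb1]; first by rewrite r1 => ->.
  case: (eqVneq w b2) => [->|wb2]; first by rewrite r2 => ->.
  by rewrite (r0 _ wb1 wb2) => euw; rewrite euw eqxx in uw.
- move=> v vr; rewrite /rep !inE.
  case: (eqVneq v b1) => [_|vb1]; first by rewrite !negb_or eq_sym ra1 a1b1 a1b2.
  case: (eqVneq v b2) => [_|vb2]; first by rewrite !negb_or eq_sym ra2 eq_sym b1a2 a2b2.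
  by rewrite !negb_or vr vb1 vb2.
Qed.

Lemma engine1 (T : finType) (e : rel T) (r : T) (par : T -> T) (dep : T -> nat)
  (a1 b1 : T) :
  simple_graph e -> 3 <= #|T| ->
  (forall v, v != r -> e (par v) v && (dep (par v) < dep v)) ->
  r != a1 -> r != b1 -> a1 != b1 -> cf par a1 b1 ->
  forall k, exists c, k_proper_coloring e k (#|T| - 2) c.
Proof.
move=> sg n3 htr ra1 rb1 a1b1 cf1.
pose rep v := if v == b1 then a1 else v.
apply: (@engine_rep T e r par dep [set b1] rep) => //; last first.
- lia.
- by rewrite card_compl2.
- move=> u w ur wr uw; rewrite /rep.
  case: (eqVneq u b1) => [eu|ub1].
    subst u; case: (eqVneq w b1) => [ewb|wb1]; first by rewrite ewb eqxx in uw.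
    by move=> <-; rewrite cfC.
  case: (eqVneq w b1) => [->|wb1]; first by move=> ->.
  by move=> euw; rewrite euw eqxx in uw.
- move=> v vr; rewrite /rep !inE.
  case: (eqVneq v b1) => [_|vb1]; first by rewrite !negb_or eq_sym ra1 a1b1.
  by rewrite !negb_or vr vb1.
Qed.

Section LB.
Variables (T : finType) (e : rel T) (k m : nat) (c : T -> T -> nat).
Hypothesis sg : simple_graph e.
Hypothesis kc : k_proper_coloring e k m c.
Hypothesis hk : 3 <= k <= #|T|.

Lemma card3 (x1 x2 x3 : T) : #|[set x1; x2; x3]| <= 3.
Proof.
rewrite -setUA cardsU1 cards2.
by case: (x1 \in [set x2; x3]); case: (x2 != x3).
Qed.

Lemma tree_for (x1 x2 x3 : T) : exists (V : {set T}) (f : rel T),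
  [/\ symmetric f, (forall x y, f x y -> e x y),
      (forall x y, x \in V -> y \in V -> connect f x y),
      [/\ x1 \in V, x2 \in V & x3 \in V] & proper_tree c f].
Proof.
have hX : #|[set x1; x2; x3]| <= k <= #|T|.
  have := card3 x1 x2 x3; case/andP: hk => h1 h2 h3.
  by rewrite h2 andbT; apply: leq_trans h3 h1.
have [S [sub cS]] := grow hX.
have [V [f [[fs fsub] [[_ [fc _]] [SV pr]]]]] := kc.2 S cS.
exists V, f; split => //.
- by move=> x y /fsub [].
- by rewrite !(subsetP SV) // (subsetP sub) // !inE eqxx ?orbT.
Qed.

Lemma pendant_edge (V : {set T}) (f : rel T) a x z :
  symmetric f -> (forall x y, f x y -> e x y) ->
  (forall x y, x \in V -> y \in V -> connect f x y) ->
  a \in V -> x \in V -> a != x -> (forall y, e a y -> y = z) -> f z a.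
Proof.
move=> fs fe fc aV xV ax hz.
have [u [v [uA vA fuv]]] := cross (A := [set a]) (fc a x aV xV)
  ltac:(by rewrite inE) ltac:(by rewrite inE eq_sym).
move: uA; rewrite inE => /eqP eu; subst u.
by have := hz v (fe _ _ fuv) => ev; subst v; rewrite fs.
Qed.

Lemma dist_pend a b z : a != b -> (forall y, e a y -> y = z) -> (forall y, e b y -> y = z) ->
  c z a != c z b.
Proof.
move=> ab ha hb.
have [V [f [fs fe fc [aV bV _] pr]]] := tree_for a b b.
apply: (pr z a b) => //.
- exact: (pendant_edge fs fe fc aV bV ab ha).
- by apply: (pendant_edge fs fe fc bV aV _ hb); rewrite eq_sym.
Qed.

Lemma count_lb (A : {set T}) z :
  (forall u w, u \in A -> w \in A -> u != w -> c z u != c z w) ->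
  (forall v, v \in A -> e z v) -> #|A| <= m.
Proof.
move=> hd he; apply: (inj_count (g := c z)).
  move=> u w uA wA cuw; apply/eqP; apply/negP => /negP uw.
  by move: (hd u w uA wA uw); rewrite cuw eqxx.
by move=> v vA; have [] := kc.1 z v (he v vA).
Qed.

End LB.

Definition star_str (T : finType) (e : rel T) r :=
  forall x y : T, e x y = ((x == r) && (y != r)) || ((y == r) && (x != r)).
Definition splus_str (T : finType) (e : rel T) r a b :=
  [/\ r != a, r != b, a != b & forall x y : T, e x y =
     [|| (x == r) && (y != r), (y == r) && (x != r), (x == a) && (y == b) | (x == b) && (y == a)]].
Definition g0_str (T : finType) (e : rel T) r a z :=
  [/\ r != a, r != z, a != z & forall x y : T, e x y =
     [|| (x == r) && (y != r) && (y != z), (y == r) && (x != r) && (x != z),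
         (x == a) && (y == z) | (x == z) && (y == a)]].

Lemma pick_other (T : finType) (x1 x2 x3 x4 : T) : 5 <= #|T| ->
  exists p, [&& p != x1, p != x2, p != x3 & p != x4].
Proof.
move=> n5; pose X := [set x1; x2; x3; x4].
have cX : #|X| <= 4.
  rewrite /X -!setUA cardsU1 cardsU1 cards2.
  by case: (x1 \in _); case: (x2 \in _); case: (x3 != x4).
have : 0 < #|~: X| by have := cardsC X; lia.
case/card_gt0P => p; rewrite /X !inE !negb_or => h.
by exists p; move: h; rewrite -!andbA.
Qed.

Section LB2.
Variables (T : finType) (e : rel T) (k m : nat) (c : T -> T -> nat).
Hypothesis kc : k_proper_coloring e k m c.
Hypothesis hk : 3 <= k <= #|T|.

Lemma star_lb r : star_str e r -> #|T| - 1 <= m.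
Proof.
move=> str.
have pend u : u != r -> forall y, e u y -> y = r.
  by move=> ur y; rewrite str (negbTE ur) /= => /andP[/eqP].
have := count_lb kc (A := ~: [set r]) (z := r).
rewrite cardsC1; move=> h; suff: #|T|.-1 <= m by lia.
apply: h.
  move=> u w; rewrite !inE => ur wr uw.
  exact: (dist_pend kc hk uw (pend u ur) (pend w wr)).
by move=> v; rewrite !inE str eqxx => ->.
Qed.

Lemma splus_lb r a b : splus_str e r a b -> #|T| - 2 <= m.
Proof.
move=> [ra rb ab str].
have pend v : v != r -> v != a -> v != b -> forall y, e v y -> y = r.
  move=> vr va vb y; rewrite str (negbTE vr) (negbTE va) (negbTE vb) /= orbF.
  by move=> /andP[/eqP].
pose P := ~: [set r; a; b].
have inP v : (v \in P) = [&& v != r, v != a & v != b].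
  by rewrite /P !inE !negb_or andbA.
have er v : v != r -> e r v by move=> vr; rewrite str eqxx vr.
have claim : [forall p in P, c r a != c r p] || [forall p in P, c r b != c r p].
  apply/negPn/negP; rewrite negb_or => /andP[/forall_inPn [p1 p1P /negPn /eqP h1]
                                       /forall_inPn [p2 p2P /negPn /eqP h2]].
  move: p1P p2P; rewrite !inP => /and3P[p1r p1a p1b] /and3P[p2r p2a p2b].
  have [V [f [fs fe fc [aV p1V p2V] pr]]] := tree_for kc hk a p1 p2.
  have f1 : f r p1.
    exact: (pendant_edge fs fe fc p1V aV p1a (pend _ p1r p1a p1b)).
  have f2 : f r p2.
    exact: (pendant_edge fs fe fc p2V aV p2a (pend _ p2r p2a p2b)).
  have [u [v [uA vA fuv]]] := cross (A := [set a; b]) (fc a p1 aV p1V)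
    ltac:(by rewrite !inE eqxx) ltac:(by rewrite !inE negb_or p1a p1b).
  have euv := fe _ _ fuv.
  move: uA vA; rewrite !inE negb_or => /orP[/eqP eu|/eqP eu] /andP[va vb]; subst u.
  - move: euv; rewrite str.
    case/or4P=> [/andP[/eqP ar _]|/andP[/eqP ev _]|/andP[_ /eqP vb']|/andP[/eqP ab' _]];
      [by rewrite ar eqxx in ra| |by rewrite vb' eqxx in vb|by rewrite ab' eqxx in ab].
    subst v.
    have := pr r a p1 ltac:(by rewrite fs) f1 ltac:(by rewrite eq_sym).
    by rewrite h1 eqxx.
  - move: euv; rewrite str.
    case/or4P=> [/andP[/eqP ar _]|/andP[/eqP ev _]|/andP[/eqP ab' _]|/andP[_ /eqP va']];
      [by rewrite ar eqxx in rb| |by rewrite ab' eqxx in ab|by rewrite va' eqxx in va].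
    subst v.
    have := pr r b p2 ltac:(by rewrite fs) f2 ltac:(by rewrite eq_sym).
    by rewrite h2 eqxx.
have gen x y : [forall p in P, c r x != c r p] -> x != r -> y != r -> x != y ->
    [set r; y] = r |: [set y] -> (forall v, v != r -> v != y -> v != x -> v \in P) ->
    #|T| - 2 <= m.
  move=> hx xr yr xy _ inP'.
  have := count_lb kc (A := ~: [set r; y]) (z := r).
  rewrite card_compl2 ?(eq_sym r) //; apply.
    move=> u w; rewrite !inE !negb_or => /andP[ur uy] /andP[wr wy] uw.
    case: (eqVneq u x) => [eu|ux].
      subst u; move/forall_inP: hx => hx; apply: hx; apply: inP' => //; by rewrite eq_sym.
    case: (eqVneq w x) => [ew|wx].
      subst w; rewrite eq_sym; move/forall_inP: hx => hx; apply: hx; exact: inP'.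
    have := inP' u ur uy ux; have := inP' w wr wy wx; rewrite !inP.
    move=> /and3P[w1 w2 w3] /and3P[u1 u2 u3].
    exact: (dist_pend kc hk uw (pend u u1 u2 u3) (pend w w1 w2 w3)).
  by move=> v; rewrite !inE negb_or => /andP[vr _]; apply: er.
case/orP: claim => [hx|hx].
  apply: (gen a b hx) => //; try by rewrite eq_sym.
  by move=> v vr vb va; rewrite inP vr va vb.
apply: (gen b a hx) => //; try by rewrite eq_sym.
by move=> v vr va vb; rewrite inP vr va vb.
Qed.

Lemma g0_lb r a z : g0_str e r a z -> #|T| - 2 <= m.
Proof.
move=> [ra rz az str].
have pend v : v != r -> v != a -> v != z -> forall y, e v y -> y = r.
  move=> vr va vz y; rewrite str.
  case/or4P=> [/andP[/andP[/eqP vr' _] _]|/andP[/andP[/eqP -> _] _]|/andP[/eqP va' _]|/andP[/eqP vz' _]] //.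
  - by rewrite vr' eqxx in vr.
  - by rewrite va' eqxx in va.
  - by rewrite vz' eqxx in vz.
have er v : v != r -> v != z -> e r v by move=> vr vz; rewrite str eqxx vr vz.
have key p : p != r -> p != a -> p != z -> c r a != c r p.
  move=> pr' pa pz.
  have [V [f [fs fe fc [zV pV _] pr]]] := tree_for kc hk z p p.
  have f1 : f r p by exact: (pendant_edge fs fe fc pV zV pz (pend _ pr' pa pz)).
  have [u [v [uA vA fuv]]] := cross (A := [set a; z]) (fc z p zV pV)
    ltac:(by rewrite !inE eqxx orbT) ltac:(by rewrite !inE negb_or pa pz).
  have euv := fe _ _ fuv.
  move: uA vA; rewrite !inE negb_or => /orP[/eqP eu|/eqP eu] /andP[va vz]; subst u.
  - move: euv; rewrite str.
    case/or4P=> [/andP[/andP[/eqP ar _] _]|/andP[/andP[/eqP ev _] _]|/andP[_ /eqP vz']|/andP[/eqP az' _]].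
    + by rewrite ar eqxx in ra.
    + subst v; apply: (pr r a p) => //; first by rewrite fs.
      by apply/eqP => eap; rewrite eap eqxx in pa.
    + by rewrite vz' eqxx in vz.
    + by rewrite az' eqxx in az.
  - move: euv; rewrite str.
    case/or4P=> [/andP[/andP[/eqP zr _] _]|/andP[/andP[_ _] /eqP zz]|/andP[/eqP za _]|/andP[_ /eqP va']].
    + by rewrite zr eqxx in rz.
    + by [].
    + by rewrite za eqxx in az.
    + by rewrite va' eqxx in va.
have := count_lb kc (A := ~: [set r; z]) (z := r).
rewrite card_compl2 //; apply.
  move=> u w; rewrite !inE !negb_or => /andP[ur uz] /andP[wr wz] uw.
  case: (eqVneq u a) => [eu|ua].
    subst u; apply: key => //; by rewrite eq_sym.
  case: (eqVneq w a) => [ew|wa].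
    subst w; rewrite eq_sym; exact: key.
  exact: (dist_pend kc hk uw (pend u ur ua uz) (pend w wr wa wz)).
by move=> v; rewrite !inE negb_or => /andP[vr vz]; apply: er.
Qed.

End LB2.

Lemma splus_ub (T : finType) (e : rel T) r a b :
  simple_graph e -> 5 <= #|T| -> splus_str e r a b ->
  forall k, exists c, k_proper_coloring e k (#|T| - 2) c.
Proof.
move=> sg n5 [ra rb ab str].
have [p /and4P[pr pa pb _]] := pick_other r a b b n5.
pose par v := if v == b then a else r.
pose dep v := if v == r then 0 else if v == b then 2 else 1.
have htr : forall v, v != r -> e (par v) v && (dep (par v) < dep v).
  move=> v vr; rewrite /par /dep; case: (eqVneq v b) => [->|vb].
    by rewrite str !eqxx !orbT (eq_sym a r) (negbTE ra) (negbTE ab) (eq_sym b r) (negbTE rb).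
  by rewrite str eqxx vr (negbTE vr).
apply: (@engine1 T e r par dep b p sg _ htr rb) => //.
- lia.
- by rewrite eq_sym.
- by rewrite eq_sym.
- by rewrite /cf /par eqxx (negbTE pb) (eq_sym a r) ra (eq_sym a p) pa rb.
Qed.

Lemma g0_ub (T : finType) (e : rel T) r a z :
  simple_graph e -> 5 <= #|T| -> g0_str e r a z ->
  forall k, exists c, k_proper_coloring e k (#|T| - 2) c.
Proof.
move=> sg n5 [ra rz az str].
have [p /and4P[pr pa pz _]] := pick_other r a z z n5.
pose par v := if v == z then a else r.
pose dep v := if v == r then 0 else if v == z then 2 else 1.
have htr : forall v, v != r -> e (par v) v && (dep (par v) < dep v).
  move=> v vr; rewrite /par /dep; case: (eqVneq v z) => [->|vz].
    by rewrite str !eqxx !orbT (eq_sym a r) (negbTE ra) (negbTE az) (eq_sym z r) (negbTE rz).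
  by rewrite str eqxx vr vz (negbTE vr).
apply: (@engine1 T e r par dep z p sg _ htr rz) => //.
- lia.
- by rewrite eq_sym.
- by rewrite eq_sym.
- by rewrite /cf /par eqxx (negbTE pz) (eq_sym a r) ra (eq_sym a p) pa rz.
Qed.

Lemma potential (T : finType) (e : rel T) (r : T) : connected_graph e ->
  exists (par0 : T -> T) (dep : T -> nat), dep r = 0 /\
    forall v, v != r -> e (par0 v) v /\ dep (par0 v) < dep v.
Proof.
move=> conn.
pose P v n := [exists t : n.-tuple T, path e r t && (last r t == v)].
have exP v : exists n, P v n.
  have /connectP[p pth lp] := conn r v.
  exists (size p); apply/existsP; exists (in_tuple p) => /=.
  by rewrite pth lp eqxx.
pose dep v := ex_minn (exP v).
have dep_le v n : P v n -> dep v <= n.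
  by move=> h; rewrite /dep; case: ex_minnP => m _ hm; apply: hm.
have dep_P v : P v (dep v) by rewrite /dep; case: ex_minnP.
have hdec v : v != r -> exists u, e u v && (dep u < dep v).
  move=> vr; have /existsP[t /andP[pt /eqP lt]] := dep_P v.
  have st := size_tuple t.
  move: pt lt st; case: (tval t) => [|x s0] //=.
    by move=> _ lr; rewrite lr eqxx in vr.
  case/lastP: s0 => [|s y] pt lt st.
    exists r; rewrite /= in pt lt; rewrite -lt (andbT) in pt *; rewrite pt /=.
    have : P r 0 by apply/existsP; exists [tuple]; rewrite /= eqxx.
    by move/dep_le => h; move: st => /= st; rewrite lt; lia.
  move: pt; rewrite rcons_path => /andP[erx /andP[pt ey]].
  rewrite last_rcons in lt; subst y.
  exists (last x s); rewrite ey /=.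
  have : P (last x s) (size (x :: s)).
    by apply/existsP; exists (in_tuple (x :: s)); rewrite /= erx pt eqxx.
  by move/dep_le => h; move: st; rewrite size_rcons /=; rewrite /= in h; lia.
pose par0 v := odflt v [pick u | e u v && (dep u < dep v)].
exists par0, dep; split.
  have : P r 0 by apply/existsP; exists [tuple]; rewrite /= eqxx.
  by move/dep_le; lia.
move=> v vr; rewrite /par0; case: pickP => [u /andP[h1 h2]|H] //=.
have [u hu] := hdec v vr; by move: (H u); rewrite /= hu.
Qed.

Ltac neqs := repeat match goal with
  | H : is_true (?x != ?y) |- context[?x == ?y] => rewrite (negbTE H)
  | H : is_true (?x != ?y) |- context[?y == ?x] => rewrite (eq_sym y x) (negbTE H)
  end.
Ltac simp := rewrite ?eqxx /=; neqs; rewrite ?eqxx /= ?orbT ?orbF ?andbT ?andbF /= ?orbT ?orbF ?andbT ?andbF //=.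
Ltac dis := solve [assumption | rewrite eq_sym; assumption].

Lemma caseD (T : finType) (e : rel T) r a b c d :
  simple_graph e -> 5 <= #|T| -> (forall v, v != r -> e r v) -> e a b -> e c d ->
  r != a -> r != b -> r != c -> r != d -> a != b -> a != c -> a != d ->
  b != c -> b != d -> c != d ->
  forall k, exists col, k_proper_coloring e k (#|T| - 3) col.
Proof.
move=> sg n5 hall eab ecd ra rb rc rd ab ac ad bc bd cd.
pose par v := if v == b then a else if v == d then c else r.
pose dep v := if v == r then 0 else if (v == b) || (v == d) then 2 else 1.
have htr : forall v, v != r -> e (par v) v && (dep (par v) < dep v).
  move=> v vr; rewrite /par /dep.
  case: (eqVneq v b) => [->|vb]; first by simp.
  case: (eqVneq v d) => [->|vd]; first by simp.
  by simp; rewrite hall.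
apply: (@engine2 T e r par dep c b a d sg n5 htr); try dis.
- by rewrite /cf /par; simp.
- by rewrite /cf /par; simp.
Qed.

Lemma caseP (T : finType) (e : rel T) r s t1 t2 :
  simple_graph e -> 5 <= #|T| -> (forall v, v != r -> e r v) -> e t1 s -> e s t2 ->
  r != s -> r != t1 -> r != t2 -> s != t1 -> s != t2 -> t1 != t2 ->
  forall k, exists col, k_proper_coloring e k (#|T| - 3) col.
Proof.
move=> sg n5 hall e1 e2 rs rt1 rt2 st1 st2 t1t2.
have [o /and4P[or os ot1 ot2]] := pick_other r s t1 t2 n5.
pose par v := if v == s then t1 else if v == t2 then s else r.
pose dep v := if v == r then 0 else if v == s then 2 else if v == t2 then 3 else 1.
have htr : forall v, v != r -> e (par v) v && (dep (par v) < dep v).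
  move=> v vr; rewrite /par /dep.
  case: (eqVneq v s) => [->|vs]; first by simp.
  case: (eqVneq v t2) => [->|vt2]; first by simp.
  by simp; rewrite hall.
apply: (@engine2 T e r par dep o s t1 t2 sg n5 htr); try dis.
- by rewrite /cf /par; simp.
- by rewrite /cf /par; simp.
Qed.

Lemma caseZ2 (T : finType) (e : rel T) r z a b :
  simple_graph e -> 5 <= #|T| -> (forall v, v != r -> v != z -> e r v) -> e a z -> e z b ->
  r != z -> r != a -> r != b -> z != a -> z != b -> a != b ->
  forall k, exists col, k_proper_coloring e k (#|T| - 3) col.
Proof.
move=> sg n5 hall e1 e2 rz ra rb za zb ab.
have [w /and4P[wr wa wz wb]] := pick_other r a z b n5.
pose par v := if v == z then a else if v == b then z else r.
pose dep v := if v == r then 0 else if v == z then 2 else if v == b then 3 else 1.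
have htr : forall v, v != r -> e (par v) v && (dep (par v) < dep v).
  move=> v vr; rewrite /par /dep.
  case: (eqVneq v z) => [->|vz]; first by simp.
  case: (eqVneq v b) => [->|vb]; first by simp.
  by simp; rewrite hall.
apply: (@engine2 T e r par dep w z a b sg n5 htr); try dis.
- by rewrite /cf /par; simp.
- by rewrite /cf /par; simp.
Qed.

Lemma caseZE1 (T : finType) (e : rel T) r z a x y :
  simple_graph e -> 5 <= #|T| -> (forall v, v != r -> v != z -> e r v) -> e a z -> e x y ->
  r != z -> r != a -> r != x -> r != y -> z != a -> z != x -> z != y ->
  a != x -> a != y -> x != y ->
  forall k, exists col, k_proper_coloring e k (#|T| - 3) col.
Proof.
move=> sg n5 hall e1 e2 rz ra rx ry za zx zy ax ay xy.
pose par v := if v == z then a else if v == y then x else r.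
pose dep v := if v == r then 0 else if (v == z) || (v == y) then 2 else 1.
have htr : forall v, v != r -> e (par v) v && (dep (par v) < dep v).
  move=> v vr; rewrite /par /dep.
  case: (eqVneq v z) => [->|vz]; first by simp.
  case: (eqVneq v y) => [->|vy]; first by simp.
  by simp; rewrite hall.
apply: (@engine2 T e r par dep x z a y sg n5 htr); try dis.
- by rewrite /cf /par; simp.
- by rewrite /cf /par; simp.
Qed.

Lemma caseZE2 (T : finType) (e : rel T) r z a y :
  simple_graph e -> 5 <= #|T| -> (forall v, v != r -> v != z -> e r v) -> e a z -> e a y ->
  r != z -> r != a -> r != y -> z != a -> z != y -> a != y ->
  forall k, exists col, k_proper_coloring e k (#|T| - 3) col.
Proof.
move=> [esym eirr] n5 hall e1 e2 rz ra ry za zy ay.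
have [w /and4P[wr wa wy wz]] := pick_other r a y z n5.
pose par v := if v == a then y else if v == z then a else r.
pose dep v := if v == r then 0 else if v == a then 2 else if v == z then 3 else 1.
have htr : forall v, v != r -> e (par v) v && (dep (par v) < dep v).
  move=> v vr; rewrite /par /dep.
  case: (eqVneq v a) => [->|va]; first by simp; rewrite esym.
  case: (eqVneq v z) => [->|vz]; first by simp.
  by simp; rewrite hall.
apply: (@engine2 T e r par dep w a y z (conj esym eirr) n5 htr); try dis.
- by rewrite /cf /par; simp.
- by rewrite /cf /par; simp.
Qed.

Lemma class_full (T : finType) (e : rel T) r :
  simple_graph e -> 5 <= #|T| -> (forall v, v != r -> e r v) ->
  (forall k, exists col, k_proper_coloring e k (#|T| - 3) col) \/ star_str e r \/
  (exists a b, splus_str e r a b).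
Proof.
move=> sg n5 hall; have [esym eirr] := sg.
have ne x y : e x y -> x != y by move=> exy; apply/eqP => exy'; rewrite exy' eirr in exy.
have er_iff y : e r y = (y != r).
  case: (eqVneq y r) => [->|yr]; [by rewrite eirr | exact: hall].
case: (boolP [exists x, exists y, [&& x != r, y != r & e x y]]); last first.
  move=> none; right; left => x y.
  case: (eqVneq x r) => [->|xr]; first by rewrite er_iff; simp.
  case: (eqVneq y r) => [->|yr]; first by rewrite esym er_iff; simp.
  simp; apply/negP => exy; move/negP: none; apply.
  by apply/existsP; exists x; apply/existsP; exists y; rewrite xr yr exy.
move=> /existsP[a /existsP[b /and3P[ar br eab]]].
have ab := ne _ _ eab.
case: (boolP [exists x, exists y, [&& x != r, y != r, e x y &
          ~~ (((x == a) && (y == b)) || ((x == b) && (y == a)))]]); last first.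
  move=> none; right; right; exists a, b; split; try dis.
  move=> x y.
  case: (eqVneq x r) => [->|xr]; first by rewrite er_iff; simp.
  case: (eqVneq y r) => [->|yr]; first by rewrite esym er_iff; simp.
  simp; apply/idP/idP.
    move=> exy; apply/negPn/negP => h; move/negP: none; apply.
    by apply/existsP; exists x; apply/existsP; exists y; rewrite xr yr exy h.
  by case/orP=> /andP[/eqP -> /eqP ->] //; rewrite esym.
move=> /existsP[x /existsP[y /and4P[xr yr exy nab]]].
have xy := ne _ _ exy.
left.
case: (eqVneq x a) => [exa|xa].
  subst x; have yb : y != b by apply/eqP => eyb; move: nab; rewrite eyb !eqxx.
  by apply: (@caseP T e r a b y sg n5 hall); try dis; try done; rewrite esym.
case: (eqVneq x b) => [exb|xb].
  subst x; have ya : y != a by apply/eqP => eya; move: nab; rewrite eya !eqxx orbT.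
  by apply: (@caseP T e r b a y sg n5 hall); try dis; try done; rewrite esym.
case: (eqVneq y a) => [eya|ya].
  subst y; by apply: (@caseP T e r a b x sg n5 hall); try dis; try done; rewrite esym.
case: (eqVneq y b) => [eyb|yb].
  subst y; by apply: (@caseP T e r b a x sg n5 hall); try dis; try done; rewrite esym.
by apply: (@caseD T e r a b x y sg n5 hall); try dis; try done; rewrite esym.
Qed.

Lemma class_nm2 (T : finType) (e : rel T) r z :
  simple_graph e -> connected_graph e -> 5 <= #|T| -> z != r -> ~~ e r z ->
  (forall v, v != r -> v != z -> e r v) ->
  (forall k, exists col, k_proper_coloring e k (#|T| - 3) col) \/ (exists a, g0_str e r a z).
Proof.
move=> sg conn n5 zr nrz hall; have [esym eirr] := sg.
have ne x y : e x y -> x != y by move=> exy; apply/eqP => exy'; rewrite exy' eirr in exy.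
have [u [a [uA aA eza]]] := cross (A := [set z]) (conn z r) ltac:(by rewrite inE) ltac:(by rewrite inE eq_sym).
move: uA aA; rewrite !inE => /eqP eu az; subst u.
have ar : a != r by apply/eqP => ear; move: nrz; rewrite -ear esym eza.
have era : e r a := hall a ar az.
case: (boolP [exists b, (b != a) && e z b]) => [/existsP[b /andP[ba ezb]]|nob].
  have br : b != r by apply/eqP => ebr; move: nrz; rewrite -ebr esym ezb.
  have bz : b != z by rewrite eq_sym; apply: ne ezb.
  by left; apply: (@caseZ2 T e r z a b sg n5 hall); try dis; try done; rewrite esym.
case: (boolP [exists x, exists y, [&& x != r, x != z, y != r, y != z & e x y]]).
  move=> /existsP[x /existsP[y /and5P[xr xz yr yz exy]]]; left.
  have xy := ne _ _ exy.
  case: (eqVneq x a) => [exa|xa].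
    by subst x; apply: (@caseZE2 T e r z a y sg n5 hall); try dis; try done; rewrite esym.
  case: (eqVneq y a) => [eya|ya].
    by subst y; apply: (@caseZE2 T e r z a x sg n5 hall); try dis; try done; rewrite esym.
  by apply: (@caseZE1 T e r z a x y sg n5 hall); try dis; try done; rewrite esym.
move=> noe; right; exists a; split; try dis.
have ez y : e z y = (y == a).
  case: (eqVneq y a) => [->|ya] //; apply/negP => ezy; move/negP: nob; apply.
  by apply/existsP; exists y; rewrite ya ezy.
have er y : e r y = (y != r) && (y != z).
  case: (eqVneq y r) => [->|yr]; first by rewrite eirr.
  case: (eqVneq y z) => [->|yz]; first by apply/negbTE.
  exact: hall.
move=> x y.
case: (eqVneq x r) => [->|xr]; first by rewrite er; simp.
case: (eqVneq x z) => [->|xz]; first by rewrite ez; simp.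
case: (eqVneq y r) => [->|yr]; first by rewrite esym er; simp.
case: (eqVneq y z) => [->|yz]; first by rewrite esym ez; simp.
simp; apply/negP => exy; move/negP: noe; apply.
by apply/existsP; exists x; apply/existsP; exists y; rewrite xr xz yr yz exy.
Qed.

Lemma pick_in (T : finType) (A : {set T}) (x y : T) : 3 <= #|A| ->
  exists w, [&& w \in A, w != x & w != y].
Proof.
move=> h.
have : 0 < #|A :\ x :\ y|.
  have h1 := cardsD1 x A; have h2 := cardsD1 y (A :\ x).
  move: h1 h2; case: (x \in A); case: (y \in A :\ x) => /=; lia.
case/card_gt0P => w; rewrite !inE => /and3P[wy wx wA].
by exists w; rewrite wA wx wy.
Qed.

Lemma pick_in1 (T : finType) (A : {set T}) (x : T) : 2 <= #|A| ->
  exists w, (w \in A) && (w != x).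
Proof.
move=> h.
have : 0 < #|A :\ x|.
  have h1 := cardsD1 x A; move: h1; case: (x \in A) => /=; lia.
case/card_gt0P => w; rewrite !inE => /andP[wx wA].
by exists w; rewrite wA wx.
Qed.

Lemma card3_sub (T : finType) (A : {set T}) (x y z : T) :
  x \in A -> y \in A -> z \in A -> x != y -> x != z -> y != z -> 3 <= #|A|.
Proof.
move=> xA yA zA xy xz yz.
have : [set x; y; z] \subset A by apply/subsetP => w; rewrite !inE => /orP[/orP[]|] /eqP ->.
move/subset_leq_card; rewrite -setUA cardsU1 cards2 !inE negb_or xy xz yz /=.
done.
Qed.

Lemma card2_sub (T : finType) (A : {set T}) (x y : T) :
  x \in A -> y \in A -> x != y -> 2 <= #|A|.
Proof.
move=> xA yA xy.
have : [set x; y] \subset A by apply/subsetP => w; rewrite !inE => /orP[] /eqP ->.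
by move/subset_leq_card; rewrite cards2 xy.
Qed.


Lemma card_compl_U1 (T : finType) (r : T) (A : {set T}) :
  r \notin A -> #|~: (r |: A)| = #|T| - 1 - #|A|.
Proof. by move=> rA; have := cardsC (r |: A); rewrite cardsU1 rA /=; lia. Qed.

Lemma set_min (T : finType) (A : {set T}) (f : T -> nat) u0 :
  u0 \in A -> exists2 u, u \in A & forall x, x \in A -> f u <= f x.
Proof.
move=> u0A; case: (@arg_minnP T u0 (mem A) f u0A) => u uA hu.
by exists u => // x xA; apply: hu.
Qed.

Lemma set_max (T : finType) (f : T -> nat) (u0 : T) :
  exists u, forall x, f x <= f u.
Proof.
case: (@arg_maxnP T u0 xpredT f erefl) => u _ hu.
by exists u => x; apply: hu.
Qed.

Lemma class_low (T : finType) (e : rel T) r :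
  simple_graph e -> connected_graph e -> 5 <= #|T| ->
  (forall v, #|[set w | e v w]| <= #|[set w | e r w]|) ->
  #|[set w | e r w]| <= #|T| - 3 ->
  forall k, exists col, k_proper_coloring e k (#|T| - 3) col.
Proof.
move=> sg conn n5 hmax hd; have [esym eirr] := sg.
have ne x y : e x y -> x != y by move=> exy; apply/eqP => exy'; rewrite exy' eirr in exy.
have [par0 [dep0 [d0 hpot]]] := potential r conn.
pose par v := if e r v then r else par0 v.
have htr : forall v, v != r -> e (par v) v && (dep0 (par v) < dep0 v).
  move=> v vr; have [h1 h2] := hpot v vr; rewrite /par; case: ifP => erv.
    by rewrite erv d0; lia.
  by rewrite h1 h2.
have parN u : u != r -> ~~ e r u -> par u != r.
  move=> ur nru; rewrite /par (negbTE nru); apply/eqP => pr.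
  by have := (hpot u ur).1; rewrite pr (negbTE nru).
have parC w : e r w -> par w = r by rewrite /par => ->.
have ep u : u != r -> e (par u) u by move=> ur; case/andP: (htr u ur).
pose Nr := [set w | e r w].
pose D := [set u | (u != r) && ~~ e r u].
have cD : 2 <= #|D|.
  have -> : D = ~: (r |: Nr) by apply/setP => v; rewrite !inE negb_or.
  rewrite card_compl_U1 ?inE ?eirr //.
  move: hd; rewrite -/Nr; lia.
have inD u : (u \in D) = (u != r) && ~~ e r u by rewrite inE.
have inN w : (w \in Nr) = e r w by rewrite inE.
have neq_of x y : e r x -> ~~ e r y -> x != y.
  by move=> h1 h2; apply/eqP => exy; move: h2; rewrite -exy h1.
case: (leqP 3 #|Nr|) => d3.
  have [u1 u1D] : exists u1, u1 \in D by apply/card_gt0P; lia.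
  have [u2 /andP[u2D u2u1]] := pick_in1 u1 cD.
  have [w1 /and3P[w1N w1p _]] := pick_in (par u1) (par u1) d3.
  have [w2 /and3P[w2N w2p w2w1]] := pick_in (par u2) w1 d3.
  move: u1D u2D w1N w2N; rewrite !inD !inN => /andP[u1r nu1] /andP[u2r nu2] ew1 ew2.
  apply: (@engine2 T e r par dep0 w1 u1 w2 u2 sg n5 htr).
  - exact: ne.
  - by rewrite eq_sym.
  - exact: ne.
  - by rewrite eq_sym.
  - exact: neq_of.
  - by rewrite eq_sym.
  - exact: neq_of.
  - by rewrite eq_sym neq_of.
  - by rewrite eq_sym.
  - exact: neq_of.
  - by rewrite /cf (parC _ ew1) eq_sym parN //= eq_sym u1r /= eq_sym.
  - by rewrite /cf (parC _ ew2) eq_sym parN //= eq_sym u2r /= eq_sym.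
have [u0 u0D] : exists u0, u0 \in D by apply/card_gt0P; lia.
have d1 : 0 < #|Nr|.
  move: (u0D); rewrite inD => /andP[u0r _].
  have [x [v [xA vA exv]]] := cross (A := [set r]) (conn r u0) ltac:(by rewrite inE) ltac:(by rewrite inE).
  move: xA; rewrite inE => /eqP ex; subst x.
  by apply/card_gt0P; exists v; rewrite inN.
case: (eqVneq #|Nr| 1) => [c1|c1ne].
  have /cards1P[c Nc] : #|Nr| == 1 by rewrite c1.
  have ec : e r c by rewrite -inN Nc inE.
  have [p /and4P[pr pc _ _]] := pick_other r c c c n5.
  have [x [v [xA vA exv]]] := cross (A := [set r; c]) (conn r p)
    ltac:(by rewrite !inE eqxx) ltac:(by rewrite !inE negb_or pr pc).
  move: xA vA; rewrite !inE negb_or => /orP[/eqP ex|/eqP ex] /andP[vr vc]; subst x.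
    by move: vc; rewrite -inN Nc inE in exv; rewrite exv.
  have h2 : 2 <= #|[set w | e c w]|.
    apply: (card2_sub (x := r) (y := v)); rewrite ?inE //.
    - by rewrite esym.
    - by rewrite eq_sym.
  by have := hmax c; rewrite -/Nr c1 => h; have := leq_trans h2 h.
have d2 : #|Nr| = 2 by lia.
have [u uD umin] := set_min dep0 u0D.
move: (uD); rewrite inD => /andP[ur nu].
pose c := par u.
have ecu : e c u := ep u ur.
have cr : c != r := parN u ur nu.
have erc : e r c.
  apply/negPn/negP => nrc.
  have cDD : c \in D by rewrite inD cr.
  have := umin c cDD; have := htr u ur; rewrite -/c => /andP[_]; lia.
have [c' /andP[c'N c'c]] := pick_in1 c (ltac:(lia) : 2 <= #|Nr|).
rewrite inN in c'N.
have inNr w : e r w -> (w == c) || (w == c').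
  move=> erw; apply/negPn/negP; rewrite negb_or => /andP[wc wc'].
  have h3 : 3 <= #|Nr|.
    apply: (card3_sub (x := c) (y := c') (z := w)); rewrite ?inN //.
    - by rewrite eq_sym.
    - by rewrite eq_sym.
    - by rewrite eq_sym.
  by move: h3; rewrite d2.
have rc : r != c := ne _ _ erc.
have rc' : r != c' := ne _ _ c'N.
case: (boolP [exists u', (u' \in D) && (par u' == c')]).
  move=> /existsP[u' /andP[u'D /eqP pu']].
  move: (u'D); rewrite inD => /andP[u'r nu'].
  apply: (@engine2 T e r par dep0 c' u c u' sg n5 htr) => //;
    try (by rewrite eq_sym); try (exact: neq_of); try (by rewrite eq_sym; exact: neq_of);
    try (by apply/eqP => uu'; move: c'c; rewrite -pu' -uu' eqxx).
  - by rewrite /cf (parC c' c'N) -/c eq_sym cr eq_sym ur eq_sym c'c.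
  - by rewrite /cf (parC c erc) pu' rc' c'c andbT eq_sym u'r.
move=> nou'.
have [x0 /andP[x0D x0u]] := pick_in1 u cD.
have x0D' : x0 \in D :\ u by rewrite in_setD1 x0u x0D.
have [x xD' xmin] := set_min dep0 x0D'.
move: (xD'); rewrite !inE => /andP[xu /andP[xr nx]].
have xD : x \in D by rewrite inD xr.
have px : par x = u.
  have exp := ep x xr; have pxr := parN x xr nx.
  case: (boolP (e r (par x))) => [erp|nrp].
    case/orP: (inNr _ erp) => /eqP pc.
      exfalso; have h3 : 3 <= #|[set w | e c w]|.
        apply: (card3_sub (x := r) (y := u) (z := x)); rewrite ?inE //.
        - by rewrite esym.
        - by rewrite -pc.
        - by rewrite eq_sym.
        - by rewrite eq_sym.
        - by rewrite eq_sym.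
      by have := hmax c; rewrite -/Nr d2 => h; have := leq_trans h3 h.
    by exfalso; move/negP: nou'; apply; apply/existsP; exists x; rewrite xD pc eqxx.
  apply/eqP/negPn/negP => pu.
  have : par x \in D :\ u by rewrite !inE pu pxr.
  move/xmin => h1; have := htr x xr => /andP[_ h2].
  by move: (leq_trans h2 h1); rewrite ltnn.
have xc : x != c by rewrite eq_sym; apply: neq_of.
apply: (@engine2 T e r par dep0 c' u c x sg n5 htr) => //;
    try (by rewrite eq_sym); try (exact: neq_of); try (by rewrite eq_sym; exact: neq_of).
- by rewrite /cf (parC c' c'N) -/c eq_sym cr eq_sym ur eq_sym c'c.
- by rewrite /cf (parC c erc) px eq_sym ur eq_sym xr eq_sym neq_of.
Qed.

Lemma classify (T : finType) (e : rel T) :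
  simple_graph e -> connected_graph e -> 5 <= #|T| ->
  (forall k, exists col, k_proper_coloring e k (#|T| - 3) col) \/
  (exists r, star_str e r) \/ (exists r a b, splus_str e r a b) \/
  (exists r a z, g0_str e r a z).
Proof.
move=> sg conn n5; have [esym eirr] := sg.
have [u0 _] : exists u0 : T, u0 \in T by apply/card_gt0P; exact: leq_trans _ n5.
have [r hr] := set_max (fun v => #|[set w | e v w]|) u0.
case: (boolP [forall v, (v != r) ==> e r v]) => [/forallP hall|].
  have hall' v : v != r -> e r v by move=> vr; move: (hall v); rewrite vr.
  case: (class_full sg n5 hall') => [h|[h|[a [b h]]]].
  - by left.
  - by right; left; exists r.
  - by right; right; left; exists r, a, b.
move=> /forallPn[z]; rewrite negb_imply => /andP[zr nrz].
case: (boolP [forall w, [&& w != r & w != z] ==> e r w]) => [/forallP hall|].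
  have hall' v : v != r -> v != z -> e r v by move=> vr vz; move: (hall v); rewrite vr vz.
  case: (class_nm2 sg conn n5 zr nrz hall') => [h|[a h]].
  - by left.
  - by right; right; right; exists r, a, z.
move=> /forallPn[w]; rewrite negb_imply => /andP[/andP[wr wz] nrw].
left; apply: (class_low sg conn n5 hr).
have sub : [set v | e r v] \subset ~: (r |: [set z; w]).
  apply/subsetP => v; rewrite !inE !negb_or => erv.
  apply/and3P; split; apply/eqP => ev; subst v.
  - by rewrite eirr in erv.
  - by rewrite erv in nrz.
  - by rewrite erv in nrw.
have := subset_leq_card sub; rewrite card_compl3 //; by rewrite eq_sym.
Qed.

From mathcomp Require Import fingroup perm.

Lemma perm3 (n : nat) (x1 x2 x3 y1 y2 y3 : 'I_n) :
  x1 != x2 -> x1 != x3 -> x2 != x3 -> y1 != y2 -> y1 != y3 -> y2 != y3 ->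
  exists s : {perm 'I_n}, [/\ s x1 = y1, s x2 = y2 & s x3 = y3].
Proof.
move=> x12 x13 x23 y12 y13 y23.
pose s1 := tperm x1 y1.
pose s2 := tperm (s1 x2) y2.
pose s3 := tperm (s2 (s1 x3)) y3.
have i1 : injective s1 := @perm_inj _ s1.
have i2 : injective s2 := @perm_inj _ s2.
have e1 : s1 x1 = y1 by rewrite /s1 tpermL.
have e2 : s2 (s1 x2) = y2 by rewrite /s2 tpermL.
have e3 : s3 (s2 (s1 x3)) = y3 by rewrite /s3 tpermL.
have ne a b (f : 'I_n -> 'I_n) : injective f -> a != b -> f a != f b.
  by move=> fi ab; apply/eqP => /fi /eqP; rewrite (negbTE ab).
have f1 : s2 y1 = y1.
  rewrite /s2 tpermD //; last by rewrite eq_sym.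
  by rewrite -e1; apply ne => //; rewrite eq_sym.
have f2 : s3 y1 = y1.
  rewrite /s3 tpermD //; last by rewrite eq_sym.
  by rewrite -f1 -e1; apply ne => //; apply ne => //; rewrite eq_sym.
have f3 : s3 y2 = y2.
  rewrite /s3 tpermD //; last by rewrite eq_sym.
  by rewrite -e2; apply ne => //; apply ne => //; rewrite eq_sym.
exists (s1 * s2 * s3)%g; rewrite !permM; split.
- by rewrite e1 f1 f2.
- by rewrite e2 f3.
- by rewrite e3.
Qed.

Lemma iso_to_splus (T : finType) (e : rel T) :
  5 <= #|T| -> isomorphic e #|T| (Splus #|T|) -> exists r a b, splus_str e r a b.
Proof.
move=> n5 [phi [[g phiK gK] hE]].
have h0 : 0 < #|T| by apply: leq_trans n5.
have h1 : 1 < #|T| by apply: leq_trans n5.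
have h2 : 2 < #|T| by apply: leq_trans n5.
pose o0 := Ordinal h0; pose o1 := Ordinal h1; pose o2 := Ordinal h2.
have key x (o : 'I_#|T|) : (x == g o) = (nat_of_ord (phi x) == o).
  apply/eqP/eqP => [->|h]; first by rewrite gK.
  by rewrite -[x]phiK; congr g; apply: val_inj.
exists (g o0), (g o1), (g o2); split.
- by rewrite key gK.
- by rewrite key gK.
- by rewrite key gK.
move=> x y; rewrite hE /Splus !key /=.
done.
Qed.

Lemma hbn (n b : nat) : 2 <= n -> b < n -> (1 <= b <= n - 2) = (b != 0) && (b != n - 1).
Proof.
move=> n2 hb; case: (eqVneq b 0) => [->|b0] //=.
case: (eqVneq b (n - 1)) => [->|bn] /=; first by apply/negbTE/negP => /andP[_ h]; lia.
by apply/andP; split; lia.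
Qed.

Lemma n1_ne (n : nat) : 3 <= n -> (n - 1 == 0) = false.
Proof. by move=> h; apply/negbTE; lia. Qed.
Lemma n1_ne' (n : nat) : 3 <= n -> (n - 1 == 1) = false.
Proof. by move=> h; apply/negbTE; lia. Qed.

Lemma iso_to_g0 (T : finType) (e : rel T) :
  5 <= #|T| -> isomorphic e #|T| (G0 #|T|) -> exists r a z, g0_str e r a z.
Proof.
move=> n5 [phi [[g phiK gK] hE]].
have h0 : 0 < #|T| by apply: leq_trans n5.
have h1 : 1 < #|T| by apply: leq_trans n5.
have h2 : #|T| - 1 < #|T| by rewrite subn1 prednK.
pose o0 := Ordinal h0; pose o1 := Ordinal h1; pose o2 := Ordinal h2.
have key x (o : 'I_#|T|) : (x == g o) = (nat_of_ord (phi x) == o).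
  apply/eqP/eqP => [->|h]; first by rewrite gK.
  by rewrite -[x]phiK; congr g; apply: val_inj.
have hb (b : nat) : b < #|T| -> (1 <= b <= #|T| - 2) = (b != 0) && (b != #|T| - 1).
  by apply: hbn; apply: leq_trans n5.
exists (g o0), (g o1), (g o2); split.
- by rewrite key gK.
- by rewrite key gK /= eq_sym (n1_ne (leq_trans _ n5)).
- by rewrite key gK /= eq_sym (n1_ne' (leq_trans _ n5)).
move=> x y; rewrite hE /G0 !key /= (hb _ (ltn_ord (phi x))) (hb _ (ltn_ord (phi y))).
by rewrite !andbA; congr [|| _, _, _ | _]; rewrite andbC.
Qed.

Lemma str_iso (T : finType) (e : rel T) (R : rel 'I_#|T|) (r a b : T) (o0 o1 o2 : 'I_#|T|) :
  r != a -> r != b -> a != b -> o0 != o1 -> o0 != o2 -> o1 != o2 ->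
  (forall phi : T -> 'I_#|T|, injective phi -> phi r = o0 -> phi a = o1 -> phi b = o2 ->
     forall x y, e x y = R (phi x) (phi y)) ->
  isomorphic e #|T| R.
Proof.
move=> ra rb ab o01 o02 o12 H.
have [s [s0 s1 s2]] := @perm3 #|T| (enum_rank r) (enum_rank a) (enum_rank b) o0 o1 o2
  ltac:(by rewrite (inj_eq enum_rank_inj)) ltac:(by rewrite (inj_eq enum_rank_inj))
  ltac:(by rewrite (inj_eq enum_rank_inj)) o01 o02 o12.
pose phi x := s (enum_rank x).
have phiI : injective phi by move=> x y /perm_inj /enum_rank_inj.
exists phi; split; last exact: H.
exists (fun o => enum_val ((s^-1)%g o)).
- by move=> x; rewrite /phi permK enum_rankK.
- by move=> o; rewrite /phi enum_valK permKV.
Qed.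

Lemma keyeq (T : finType) n (phi : T -> 'I_n) x v (o : 'I_n) :
  injective phi -> phi v = o -> (x == v) = (nat_of_ord (phi x) == nat_of_ord o).
Proof. by move=> phiI ho; rewrite val_eqE -ho (inj_eq phiI). Qed.

Lemma splus_to_iso (T : finType) (e : rel T) r a b :
  5 <= #|T| -> splus_str e r a b -> isomorphic e #|T| (Splus #|T|).
Proof.
move=> n5 [ra rb ab str].
have h0 : 0 < #|T| by apply: leq_trans n5.
have h1 : 1 < #|T| by apply: leq_trans n5.
have h2 : 2 < #|T| by apply: leq_trans n5.
apply: (@str_iso T e _ r a b (Ordinal h0) (Ordinal h1) (Ordinal h2) ra rb ab) => //.
move=> phi phiI p0 p1 p2 x y.
rewrite str /Splus /= !(keyeq x phiI p0) !(keyeq y phiI p0) !(keyeq x phiI p1)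
  !(keyeq y phiI p1) !(keyeq x phiI p2) !(keyeq y phiI p2) /=.
done.
Qed.

Lemma g0_to_iso (T : finType) (e : rel T) r a z :
  5 <= #|T| -> g0_str e r a z -> isomorphic e #|T| (G0 #|T|).
Proof.
move=> n5 [ra rz az str].
have h0 : 0 < #|T| by apply: leq_trans n5.
have h1 : 1 < #|T| by apply: leq_trans n5.
have h2 : #|T| - 1 < #|T| by rewrite subn1 prednK.
have hb (b : nat) : b < #|T| -> (1 <= b <= #|T| - 2) = (b != 0) && (b != #|T| - 1).
  by apply: hbn; apply: leq_trans n5.
apply: (@str_iso T e _ r a z (Ordinal h0) (Ordinal h1) (Ordinal h2) ra rz az) => //.
- by rewrite -val_eqE /= eq_sym (n1_ne (leq_trans _ n5)).
- by rewrite -val_eqE /= eq_sym (n1_ne' (leq_trans _ n5)).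
move=> phi phiI p0 p1 p2 x y.
rewrite str /G0 /= !(keyeq x phiI p0) !(keyeq y phiI p0) !(keyeq x phiI p1)
  !(keyeq y phiI p1) !(keyeq x phiI p2) !(keyeq y phiI p2) /=.
rewrite (hb _ (ltn_ord (phi x))) (hb _ (ltn_ord (phi y))).
by rewrite !andbA; congr [|| _, _, _ | _]; rewrite andbC.
Qed.

Lemma nle3 (n : nat) : 5 <= n -> n - 2 <= n - 3 -> False.
Proof. lia. Qed.
Lemma nle1 (n : nat) : 5 <= n -> n - 1 <= n - 2 -> False.
Proof. lia. Qed.

Theorem mainTheorem17 (T : finType) (e : rel T) :
  simple_graph e -> connected_graph e -> 5 <= #|T| ->
  forall k : nat, 3 <= k <= #|T| ->
  (px_k_eq e k (#|T| - 2) <->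
   isomorphic e #|T| (Splus #|T|) \/ isomorphic e #|T| (G0 #|T|)).
Proof.
move=> sg conn n5 k hk; split.
  move=> [[c0 hc0] hmin].
  case: (classify sg conn n5) => [h|[[r str]|[[r [a [b str]]]|[r [a [z str]]]]]].
  - by have [c hc] := h k; have := hmin _ _ hc; move/(nle3 n5).
  - by have := star_lb hc0 hk str; move/(nle1 n5).
  - by left; exact: splus_to_iso str.
  - by right; exact: g0_to_iso str.
case=> hi.
  have [r [a [b str]]] := iso_to_splus n5 hi.
  split; first by have [c hc] := splus_ub sg n5 str k; exists c.
  move=> m c hc; have := splus_lb hc hk str. exact: id.
have [r [a [z str]]] := iso_to_g0 n5 hi.
split; first by have [c hc] := g0_ub sg n5 str k; exists c.
by move=> m c hc; have := g0_lb hc hk str; exact: id.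
Qed.
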